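(* Let $X$ and $Y$ be finite $T_0$-spaces. (1) If $X$ and $Y$ are minimal finite spaces and $X$ is homotopy equivalent to $Y$, then $\det(X_M)=\det(Y_M)$. (2) If $X$ is homotopy equivalent to $Y$, then $|\det(X_M)|=|\det(Y_M)|$. (3) If $X$ is contractible, then $\det(X_M)=0$.
   Context: A finite $T_0$-space is identified with a finite poset via $x\le y$ iff $U_x\subseteq U_y$, where $U_x$ is the minimal open set containing $x$. For a labelling $X=\{x_1,\dots,x_n\}$, $X_M=(x_{i,j})$ is the $n\times n$ matrix with $x_{i,j}=0$ if $x_i\le x_j$ and $x_{i,j}=1$ otherwise; its determinant does not depend on the labelling. A point $x$ is a beat point if $\{y:y<x\}$ has a maximum or $\{y:y>x\}$ has a minimum. A minimal finite space is a finite $T_0$-space with no beat points. Homotopy equivalence and contractibility are in the usual topological sense. *)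

(* Defs.v *)
From HB Require Import structures.
From mathcomp Require Import all_boot all_order all_algebra.
From mathcomp Require Import all_classical all_reals.
From mathcomp Require Import topology separation_axioms.
From mathcomp Require Import Rstruct Rstruct_topology.
From Stdlib Require Import Rdefinitions.

Set Implicit Arguments.
Unset Strict Implicit.
Unset Printing Implicit Defensive.
Import Order.TTheory GRing.Theory Num.Theory.
Local Open Scope classical_set_scope.
Local Open Scope ring_scope.

Definition RR : realType := Rdefinitions.R.

Section FiniteSpaces.
Variable X : topologicalType.

(* A labelling of X by 'I_n (in particular X is finite with n points). *)
Definition labelling (n : nat) (f : 'I_n -> X) := bijective f.

Definition finite_T0 (n : nat) (f : 'I_n -> X) :=
  labelling f /\ kolmogorov_space X.

Definition minU (x : X) : set X := \bigcap_(U in [set U | open U /\ U x]) U.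

Definition fle (x y : X) : Prop := minU x `<=` minU y.
Definition flt (x y : X) : Prop := fle x y /\ x <> y.

Definition beat_point (x : X) : Prop :=
  (exists m, flt m x /\ forall y, flt y x -> fle y m) \/
  (exists m, flt x m /\ forall y, flt x y -> fle m y).

Definition minimal_finite_space (n : nat) (f : 'I_n -> X) :=
  finite_T0 f /\ forall x : X, ~ beat_point x.

Definition XM (n : nat) (f : 'I_n -> X) : 'M[int]_n :=
  \matrix_(i < n, j < n) (if `[< fle (f i) (f j) >] then 0 else 1).
End FiniteSpaces.

Definition homotopic (X Y : topologicalType) (f g : X -> Y) : Prop :=
  exists H : X * RR -> Y,
    {within [set p : X * RR | (0 <= p.2 <= 1)%R], continuous H} /\
    (forall x, H (x, 0%R) = f x) /\ (forall x, H (x, 1%R) = g x).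

Definition homotopy_equivalent (X Y : topologicalType) : Prop :=
  exists (f : X -> Y) (g : Y -> X),
    continuous f /\ continuous g /\
    homotopic (g \o f) idfun /\ homotopic (f \o g) idfun.

Definition contractible (X : topologicalType) : Prop :=
  exists x0 : X, homotopic idfun (fun _ : X => x0).

(* Main.v *)
Require Import Defs.
From HB Require Import structures.
From mathcomp Require Import all_boot all_order all_algebra.
From mathcomp Require Import all_classical all_reals.
From mathcomp Require Import topology separation_axioms.
From mathcomp Require Import normedtype Rstruct Rstruct_topology.
From Stdlib Require Import Classical.
From Stdlib Require Import Rdefinitions.
Set Implicit Arguments.
Unset Strict Implicit.
Unset Printing Implicit Defensive.
Import Order.TTheory GRing.Theory Num.Theory.

Section Fence.
Variables (T1 T2 : finType) (le1 : rel T1) (le2 : rel T2).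

Implicit Types (A : {set T1}) (B : {set T2}) (g h : T1 -> T2).
Definition monoon (A : {set T1}) (g : T1 -> T2) :=
  forall x y, x \in A -> y \in A -> le1 x y -> le2 (g x) (g y).
Definition into (A : {set T1}) (B : {set T2}) (g : T1 -> T2) :=
  forall x, x \in A -> g x \in B.
Definition fstep A B (g h : T1 -> T2) :=
  [/\ into A B g, into A B h, monoon A g, monoon A h &
      forall x, x \in A -> le2 (g x) (h x)].

Inductive fence A B : (T1 -> T2) -> (T1 -> T2) -> Prop :=
| fen_refl g : fence A B g g
| fen_step g h k : fstep A B g h \/ fstep A B h g -> fence A B h k -> fence A B g k.

Lemma fence_trans A B g h k : fence A B g h -> fence A B h k -> fence A B g k.
Proof.
elim=> // g' h' k' st _ IH hk; apply: fen_step st (IH hk).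
Qed.

Lemma fence_sym A B g h : fence A B g h -> fence A B h g.
Proof.
elim=> [g'|g' h' k' st _ IH]; first exact: fen_refl.
apply: fence_trans IH _; apply: fen_step (fen_refl _ _ _).
by case: st; [right|left].
Qed.

Lemma fence1 A B g h : fstep A B g h -> fence A B g h.
Proof. by move=> st; apply: fen_step (fen_refl _ _ _); left. Qed.

Lemma fence_widen A B (B' : {set T2}) g h : B \subset B' -> fence A B g h -> fence A B' g h.
Proof.
move=> sB; elim=> [g'|g' h' k' st _ IH]; first exact: fen_refl.
apply: fen_step IH.
have W u v : fstep A B u v -> fstep A B' u v.
  by case=> iu iv mu mv l; split=> // x xA; apply: (fintype.subsetP sB); [apply: iu|apply: iv].
by case: st => s; [left|right]; apply: W.
Qed.

Lemma fence_eq A B g h : reflexive le2 -> into A B g -> monoon A g ->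
  (forall x, x \in A -> g x = h x) -> fence A B g h.
Proof.
move=> r ig mg e; apply: fence1; split => //.
- by move=> x xA; rewrite -e //; apply: ig.
- by move=> x y xA yA lxy; rewrite -!e //; apply: mg.
- by move=> x xA; rewrite -e.
Qed.
End Fence.

Lemma fence_post (T1 T2 T3 : finType) (le1 : rel T1) (le2 : rel T2) (le3 : rel T3)
   (A : {set T1}) (B : {set T2}) (B' : {set T3}) (k : T2 -> T3) (g h : T1 -> T2) :
  into B B' k -> monoon le2 le3 B k -> fence le1 le2 A B g h ->
  fence le1 le3 A B' (k \o g) (k \o h).
Proof.
move=> ik mk; elim=> [g'|g' h' k' st _ IH]; first exact: fen_refl.
apply: fen_step IH.
have W u v : fstep le1 le2 A B u v -> fstep le1 le3 A B' (k \o u) (k \o v).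
  case=> iu iv mu mv l; split.
  - by move=> x xA; apply/ik/iu.
  - by move=> x xA; apply/ik/iv.
  - by move=> x y xA yA lxy; apply: mk; [apply: iu|apply: iu|apply: mu].
  - by move=> x y xA yA lxy; apply: mk; [apply: iv|apply: iv|apply: mv].
  - by move=> x xA; apply: mk; [apply: iu|apply: iv|apply: l].
by case: st => s; [left|right]; apply: W.
Qed.

Lemma fence_pre (T0 T1 T2 : finType) (le0 : rel T0) (le1 : rel T1) (le2 : rel T2)
   (A' : {set T0}) (A : {set T1}) (B : {set T2}) (j : T0 -> T1) (g h : T1 -> T2) :
  into A' A j -> monoon le0 le1 A' j -> fence le1 le2 A B g h ->
  fence le0 le2 A' B (g \o j) (h \o j).
Proof.
move=> ij mj; elim=> [g'|g' h' k' st _ IH]; first exact: fen_refl.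
apply: fen_step IH.
have W u v : fstep le1 le2 A B u v -> fstep le0 le2 A' B (u \o j) (v \o j).
  case=> iu iv mu mv l; split.
  - by move=> x xA; apply/iu/ij.
  - by move=> x xA; apply/iv/ij.
  - by move=> x y xA yA lxy; apply: mu; [apply: ij|apply: ij|apply: mj].
  - by move=> x y xA yA lxy; apply: mv; [apply: ij|apply: ij|apply: mj].
  - by move=> x xA; apply/l/ij.
by case: st => s; [left|right]; apply: W.
Qed.

Section Stong.
Variables (T : finType).

Definition ltr (le : rel T) x y := (x != y) && le x y.
Definition downbeat (le : rel T) (A : {set T}) x :=
  x \in A /\ exists2 m, m \in A & ltr le m x /\ (forall y, y \in A -> ltr le y x -> le y m).
Definition nobeat (le : rel T) A :=
  forall x, ~ downbeat le A x /\ ~ downbeat (fun a b => le b a) A x.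

Lemma stong (le : rel T) (A : {set T}) (g : T -> T) :
  reflexive le -> antisymmetric le -> transitive le ->
  (forall x, ~ downbeat le A x) -> into A A g -> monoon le le A g ->
  (forall x, x \in A -> le (g x) x) -> forall x, x \in A -> g x = x.
Proof.
move=> lr la lt nb ig mg gle.
suff H k : forall x, x \in A -> #|[set y | le y x]| <= k -> g x = x.
  by move=> x xA; apply: (H _ x xA (leqnn _)).
elim: k => [|k IH] x xA.
  by rewrite leqn0 cards_eq0 => /eqP/setP/(_ x); rewrite !inE lr.
move=> hk; case: (eqVneq (g x) x) => // ne; exfalso.
apply: (nb x); split => //; exists (g x); first exact: ig.
split; first by rewrite /ltr ne gle.
move=> y yA /andP[nyx lyx].
have <- : g y = y.
  apply: IH => //; rewrite -ltnS; apply: leq_trans hk.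
  apply: proper_card; apply/properP; split.
    by apply/fintype.subsetP => z; rewrite !inE => /lt; apply.
  exists x; rewrite !inE ?lr //; apply/negP => lxy.
  by move/negP: nyx; apply; apply/eqP/la; rewrite lyx lxy.
exact: mg.
Qed.

Lemma fence_id (le : rel T) (A : {set T}) (g : T -> T) :
  reflexive le -> antisymmetric le -> transitive le -> nobeat le A ->
  fence le le A A g id -> forall x, x \in A -> g x = x.
Proof.
move=> lr la lt nb.
have la' : antisymmetric (fun a b => le b a).
  by move=> a b /andP[h1 h2]; apply: la; rewrite h1 h2.
have lt' : transitive (fun a b => le b a) by move=> a b c h1 h2; apply: lt h1.
have E u v : fstep le le A A u v ->
   (forall x, x \in A -> u x = x) <-> (forall x, x \in A -> v x = x).
  case=> iu iv mu mv l; split => P.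
  - apply: (@stong (fun a b => le b a)) => //.
    + by move=> x; case: (nb x).
    + by move=> x y xA yA; apply: mv.
    + by move=> x xA; rewrite -{1}(P x xA); apply: l.
  - apply: stong => //; first by move=> x; case: (nb x).
    by move=> x xA; rewrite -{2}(P x xA); apply: l.
suff K u v : fence le le A A u v ->
   (forall x, x \in A -> u x = x) <-> (forall x, x \in A -> v x = x).
  by move=> /K K'; apply/K'.
elim=> // u' v' w' [s|s] _ [IH1 IH2].
  by split => P; [apply/IH1/(E _ _ s)|apply/(E _ _ s)/IH2].
by split => P; [apply/IH1/(E _ _ s)|apply/(E _ _ s)/IH2].
Qed.
End Stong.
Local Open Scope ring_scope.
Lemma det_reindex k1 k2 (M1 : 'M[int]_k1) (M2 : 'M[int]_k2) (s : 'I_k1 -> 'I_k2) :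
  k1 = k2 -> injective s -> (forall i j, M2 (s i) (s j) = M1 i j) ->
  \det M1 = \det M2.
Proof.
move=> e; subst k2 => si H.
pose p := perm.perm si.
have -> : M1 = col_perm p (row_perm p M2).
  by apply/matrixP => i j; rewrite !mxE !perm.permE H.
rewrite col_permE row_permE !det_mulmx !det_perm perm.odd_permV mulrC mulrA.
by rewrite -signr_addb addbb expr0 mul1r.
Qed.

Lemma det_rows k (P : 'M[int]_k.+1) im :
  im != ord_max -> (forall j, j != ord_max -> P ord_max j = P im j) ->
  P ord_max ord_max = P im ord_max - 1 ->
  \det P = - \det (row' ord_max (col' ord_max P)).
Proof.
move=> nim Hj Hm.
pose Q := \matrix_(i, j) (if i == ord_max then P im j else P i j).
pose D := \matrix_(i, j) (if i == ord_max then - ((j == ord_max)%:R) else P i j) : 'M[int]_k.+1.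
have liftne (i : 'I_k) : (lift ord_max i == ord_max) = false.
  by apply/negbTE; rewrite eq_sym neq_lift.
have -> : \det P = 1 * \det Q + 1 * \det D.
  apply: (determinant_multilinear (i0 := ord_max)).
  - apply/rowP => j; rewrite !mxE eqxx !mul1r.
    case: (eqVneq j ord_max) => [->|nj]; first by rewrite Hm.
    by rewrite Hj // mulr0n addr0.
  - by apply/matrixP => i j; rewrite !mxE liftne.
  - by apply/matrixP => i j; rewrite !mxE liftne.
have -> : \det Q = 0.
  apply: (determinant_alternate (i1 := ord_max) (i2 := im)); first by rewrite eq_sym.
  by move=> j; rewrite !mxE eqxx (negbTE nim).
rewrite mul1r add0r mul1r (expand_det_row _ ord_max) (bigD1 ord_max) //=.
rewrite big1 ?addr0; last by move=> j nj; rewrite !mxE eqxx (negbTE nj) oppr0 mul0r.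
rewrite !mxE !eqxx mulN1r /cofactor -signr_odd oddD addbb expr0 mul1r.
congr (- \det _); apply/matrixP => i j; rewrite !mxE liftne //.
Qed.

Definition emat (T : finType) (le : rel T) (A : {set T}) : 'M[int]_#|A| :=
  \matrix_(i, j) (if le (enum_val i) (enum_val j) then 0 else 1).

Lemma emat_iso (T1 T2 : finType) (le1 : rel T1) (le2 : rel T2) (A : {set T1}) (B : {set T2})
  (f : T1 -> T2) (g : T2 -> T1) :
  into A B f -> into B A g -> (forall a, a \in A -> g (f a) = a) ->
  (forall b, b \in B -> f (g b) = b) ->
  (forall a b, a \in A -> b \in A -> le2 (f a) (f b) = le1 a b) ->
  \det (emat le1 A) = \det (emat le2 B).
Proof.
move=> iF iG gf fg hle.
pose s (i : 'I_#|A|) := enum_rank_in (iF _ (enum_valP i)) (f (enum_val i)).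
pose t (i : 'I_#|B|) := enum_rank_in (iG _ (enum_valP i)) (g (enum_val i)).
have sE i : enum_val (s i) = f (enum_val i).
  by rewrite /s enum_rankK_in //; apply: (iF _ (enum_valP i)).
have tE i : enum_val (t i) = g (enum_val i).
  by rewrite /t enum_rankK_in //; apply: (iG _ (enum_valP i)).
have si : injective s.
  move=> i j /(congr1 enum_val); rewrite !sE => /(congr1 g).
  by rewrite !gf ?enum_valP // => /enum_val_inj.
have ti : injective t.
  move=> i j /(congr1 enum_val); rewrite !tE => /(congr1 f).
  by rewrite !fg ?enum_valP // => /enum_val_inj.
apply: (det_reindex (s := s)).
- by apply/eqP; rewrite eqn_leq; have := leq_card s si; have := leq_card t ti;
    rewrite !card_ord => -> ->.
- exact: si.
- by move=> i j; rewrite !mxE !sE hle ?enum_valP.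
Qed.

Lemma emat_tr (T : finType) (le : rel T) (A : {set T}) :
  \det (emat (fun a b => le b a) A) = \det (emat le A).
Proof.
by rewrite -det_tr; congr (\det _); apply/matrixP => i j; rewrite !mxE.
Qed.

Lemma det_upbeat (T : finType) (le : rel T) (A : {set T}) x :
  reflexive le -> antisymmetric le -> transitive le ->
  downbeat (fun a b => le b a) A x ->
  \det (emat le A) = - \det (emat le (A :\ x)).
Proof.
move=> lr la lt [xA [m mA [/andP[nmx lxm] Hm]]].
pose k := #|A :\ x|.
pose tau (i : 'I_k.+1) : T :=
  if unlift ord_max i is Some j then @enum_val T (mem (A :\ x)) j else x.
have tauA i : tau i \in A.
  rewrite /tau; case: unliftP => [j _|_] //.
  by have := enum_valP j; rewrite !inE => /andP[].
have tauinj : injective tau.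
  have nx (j : 'I_k) : (@enum_val T (mem (A :\ x)) j == x) = false.
    by have := enum_valP j; rewrite !inE => /andP[/negbTE].
  move=> i1 i2; rewrite /tau.
  case: unliftP => [j1 ->|->]; case: unliftP => [j2 ->|->] //.
  - by move=> /enum_val_inj ->.
  - by move=> /eqP; rewrite nx.
  - by move=> /esym /eqP; rewrite nx.
pose N := \matrix_(i, j) (if le (tau i) (tau j) then 0 else 1) : 'M[int]_k.+1.
have -> : \det (emat le A) = \det N.
  symmetry; apply: (det_reindex (s := fun i => enum_rank_in xA (tau i))).
  - by rewrite (cardsD1 x A) xA add1n.
  - by move=> i j /(congr1 enum_val); rewrite !enum_rankK_in //; apply: tauinj.
  - by move=> i j; rewrite !mxE !enum_rankK_in.
have mAx : m \in A :\ x by rewrite !inE mA nmx.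
pose im := lift ord_max (enum_rank_in mAx m).
have tim : tau im = m by rewrite /tau liftK enum_rankK_in.
have tmax : tau ord_max = x by rewrite /tau unlift_none.
rewrite (@det_rows _ N im).
- congr (- \det _); apply/matrixP => i j; rewrite !mxE /tau !liftK //.
- by rewrite eq_sym neq_lift.
- move=> j nj; rewrite !mxE tim tmax.
  have : tau j != x by rewrite -tmax (inj_eq tauinj).
  move=> njx.
  have : le x (tau j) = le m (tau j).
    apply/idP/idP => h; last exact: lt h.
    by apply: Hm; rewrite ?tauA // /ltr njx h.
  by move=> ->.
- rewrite !mxE tim tmax lr.
  have -> : le m x = false.
    by apply/negP => h; move/negP: nmx; apply; apply/eqP/la; rewrite h lxm.
  by rewrite subrr.
Qed.

Section Core.
Variables (T : finType) (le : rel T).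
Hypotheses (lr : reflexive le) (la : antisymmetric le) (lt : transitive le).

Definition coreP (A : {set T}) := exists C : {set T}, exists r : T -> T,
  [/\ C \subset A, into A C r, (forall c, c \in C -> r c = c),
      monoon le le A r & fence le le A A r id] /\
  `|\det (emat le A)| = `|\det (emat le C)| /\ nobeat le C.

Lemma core_nobeat (A : {set T}) : nobeat le A -> coreP A.
Proof.
move=> nb; exists A, id; split => //; split => //.
all: try by move=> x y xA yA.
all: by apply: fen_refl.
Qed.

Lemma core_step (A : {set T}) (x : T) (r1 : T -> T) : x \in A -> into A (A :\ x) r1 ->
  (forall y, y \in A :\ x -> r1 y = y) -> monoon le le A r1 ->
  fence le le A A r1 id -> `|\det (emat le A)| = `|\det (emat le (A :\ x))| ->
  coreP (A :\ x) -> coreP A.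
Proof.
move=> xA i1 f1 m1 fe1 d1 [C [r2 [[sC i2 f2 m2 fe2] [d2 nb]]]].
exists C, (r2 \o r1); split; last split; [split|by rewrite d1 d2|by []].
- exact: fintype.subset_trans sC (subD1set A x).
- by move=> y yA; apply/i2/i1.
- by move=> c cC /=; rewrite f1 ?f2 //; apply: (fintype.subsetP sC).
- by move=> y z yA zA lyz; apply: m2; [apply: i1|apply: i1|apply: m1].
- apply: fence_trans _ fe1.
  apply: (@fence_widen _ _ _ _ _ (A :\ x)); first exact: subD1set.
  exact: (fence_pre i1 m1 fe2).
Qed.

Lemma retract_down (le' : rel T) (A : {set T}) (x m : T) : reflexive le' -> transitive le' ->
  m \in A -> ltr le' m x -> (forall y, y \in A -> ltr le' y x -> le' y m) ->
  let r1 := fun y => if y == x then m else y in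
  [/\ into A (A :\ x) r1, (forall y, y \in A :\ x -> r1 y = y),
      monoon le' le' A r1 & fstep le' le' A A r1 id].
Proof.
move=> lr' lt' mA /andP[nmx lmx] Hm r1.
have i1 : into A (A :\ x) r1.
  by move=> y yA; rewrite /r1; case: eqVneq => [_|nyx]; rewrite !inE ?nmx ?mA ?nyx.
have m1 : monoon le' le' A r1.
  move=> y z yA zA lyz; rewrite /r1.
  case: (eqVneq y x) => [eyx|nyx]; case: (eqVneq z x) => [ezx|nzx] //.
  - by apply: lt' lmx _; rewrite -eyx.
  - by apply: Hm => //; rewrite /ltr nyx -ezx.
split => //.
- by move=> y; rewrite !inE /r1 => /andP[/negbTE -> _].
- split => //.
  + by move=> y /i1; rewrite inE => /andP[].
  move=> y yA; rewrite /r1; case: eqVneq => [->|]; [exact: lmx|move=> _; exact: lr'].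
Qed.

Lemma core_all A : coreP A.
Proof.
suff H k : forall A : {set T}, (#|A| <= k)%nat -> coreP A by apply: (H _ A (leqnn _)).
elim: k => [|k IH] B hB.
  apply: core_nobeat => x; split; case=> xB; move: hB;
    by rewrite leqn0 cards_eq0 => /eqP Be; rewrite Be inE in xB.
case: (classic (exists x, downbeat le B x \/ downbeat (fun a b => le b a) B x)); last first.
  move=> nex; apply: core_nobeat => x; split => h; apply: nex; exists x; by [left|right].
have lr' : reflexive (fun a b => le b a) by move=> a.
have la' : antisymmetric (fun a b => le b a).
  by move=> a b /andP[h1 h2]; apply: la; rewrite h1 h2.
have lt' : transitive (fun a b => le b a) by move=> a b c h1 h2; apply: lt h1.
move=> [x [[xB [m mB [lmx Hm]]]|[xB [m mB [lmx Hm]]]]].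
- have [i1 f1 m1 st] := retract_down lr lt mB lmx Hm.
  apply: (core_step xB i1 f1 m1 (fence1 st)).
  + have -> : \det (emat le B) = \det (emat (fun a b => le b a) B) by rewrite emat_tr.
    have -> : \det (emat le (B :\ x)) = \det (emat (fun a b => le b a) (B :\ x)) by rewrite emat_tr.
    rewrite (@det_upbeat _ (fun a b => le b a) B x) //; first by rewrite normrN.
    by split => //; exists m.
  + apply: IH; rewrite -ltnS; apply: leq_trans hB.
    by rewrite (cardsD1 x B) xB.
- have [i1 f1 m1 st] := retract_down lr' lt' mB lmx Hm.
  have m1' : monoon le le B (fun y => if y == x then m else y).
    by move=> y z yB zB lyz; apply: m1.
  apply: (core_step xB i1 f1 m1').
  + apply: fence_sym; apply: fence1.
    by case: st => i1' i2' _ _ l; split => //.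
  + rewrite (@det_upbeat _ le B x) //; first by rewrite normrN.
    by split => //; exists m.
  + apply: IH; rewrite -ltnS; apply: leq_trans hB.
    by rewrite (cardsD1 x B) xB.
Qed.
End Core.

Lemma fence_ext (T1 T2 : finType) (le1 : rel T1) (le2 : rel T2) A B (g g' h : T1 -> T2) :
  g =1 g' -> fence le1 le2 A B g h -> fence le1 le2 A B g' h.
Proof. by move=> /boolp.funext ->. Qed.

Section Iso.
Variables (T1 T2 : finType) (le1 : rel T1) (le2 : rel T2).
Hypotheses (lr1 : reflexive le1) (la1 : antisymmetric le1) (lt1 : transitive le1).
Hypotheses (lr2 : reflexive le2) (la2 : antisymmetric le2) (lt2 : transitive le2).

Lemma half_iso (f : T1 -> T2) (g : T2 -> T1) (C : {set T1}) (rX : T1 -> T1)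
   (rY : T2 -> T2) (D : {set T2}) :
  monoon le1 le2 [set: T1]%SET f -> monoon le2 le1 [set: T2]%SET g ->
  fence le1 le1 [set: T1]%SET [set: T1]%SET (g \o f) id ->
  into [set: T1]%SET C rX -> (forall c, c \in C -> rX c = c) -> monoon le1 le1 [set: T1]%SET rX ->
  into [set: T2]%SET D rY -> monoon le2 le2 [set: T2]%SET rY -> fence le2 le2 [set: T2]%SET [set: T2]%SET rY id ->
  nobeat le1 C ->
  forall c, c \in C -> rX (g (rY (f c))) = c.
Proof.
move=> mf mg fgf iX fX mX iY mY fY nb.
apply: (fence_id lr1 la1 lt1 nb).
have iT1 (A : {set T1}) (h : T1 -> T1) : into A [set: _]%SET h by move=> x; rewrite inE.
have iT2 (A : {set T2}) (h : T2 -> T2) : into A [set: _]%SET h by move=> x; rewrite inE.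
have iT12 (A : {set T1}) (h : T1 -> T2) : into A [set: _]%SET h by move=> x; rewrite inE.
have iT21 (A : {set T2}) (h : T2 -> T1) : into A [set: _]%SET h by move=> x; rewrite inE.
have monC (T' : finType) (le' : rel T') (h : T1 -> T') : monoon le1 le' [set: T1]%SET h -> monoon le1 le' C h.
  by move=> mh x y _ _; apply: mh; rewrite inE.
have e1 := fence_pre (iT1 C id) (monC _ _ _ (fun x y _ _ (h : le1 x y) => h)) fgf.
have e2 := fence_pre (iT12 C f) (monC _ _ _ mf) (fence_post (iT21 [set: T2]%SET g) mg fY).
have e3 := fence_trans e2 e1.
have e4 := fence_post iX mX e3.
have e5 : fence le1 le1 C C (rX \o id \o id) id.
  apply: fence_eq => //.
  - by move=> x xC /=; rewrite fX.
  - by move=> x y xC yC lxy /=; rewrite !fX.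
by apply: fence_ext (fence_trans e4 e5).
Qed.

End Iso.

Lemma core_iso (T1 T2 : finType) (le1 : rel T1) (le2 : rel T2)
  (lr1 : reflexive le1) (la1 : antisymmetric le1) (lt1 : transitive le1)
  (lr2 : reflexive le2) (la2 : antisymmetric le2) (lt2 : transitive le2) (f : T1 -> T2) (g : T2 -> T1) (C : {set T1}) (rX : T1 -> T1)
   (rY : T2 -> T2) (D : {set T2}) :
  monoon le1 le2 [set: T1]%SET f -> monoon le2 le1 [set: T2]%SET g ->
  fence le1 le1 [set: T1]%SET [set: T1]%SET (g \o f) id -> fence le2 le2 [set: T2]%SET [set: T2]%SET (f \o g) id ->
  into [set: T1]%SET C rX -> (forall c, c \in C -> rX c = c) -> monoon le1 le1 [set: T1]%SET rX ->
  fence le1 le1 [set: T1]%SET [set: T1]%SET rX id ->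
  into [set: T2]%SET D rY -> (forall c, c \in D -> rY c = c) -> monoon le2 le2 [set: T2]%SET rY ->
  fence le2 le2 [set: T2]%SET [set: T2]%SET rY id ->
  nobeat le1 C -> nobeat le2 D ->
  \det (emat le1 C) = \det (emat le2 D).
Proof.
move=> mf mg fgf ffg iX fX mX fXi iY fY mY fYi nbC nbD.
have H1 := half_iso lr1 la1 lt1 mf mg fgf iX fX mX iY mY fYi nbC.
have H2 := half_iso lr2 la2 lt2 mg mf ffg iY fY mY iX mX fXi nbD.
apply: (emat_iso (f := fun c => rY (f c)) (g := fun d => rX (g d))).
- by move=> x _; apply: iY; rewrite inE.
- by move=> x _; apply: iX; rewrite inE.
- exact: H1.
- exact: H2.
- move=> a b aC bC; apply/idP/idP => h; last by apply: mY; rewrite ?inE //; apply: mf; rewrite ?inE.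
  rewrite -(H1 a aC) -(H1 b bC); apply: mX; rewrite ?inE //; apply: mg; rewrite ?inE //.
Qed.

Lemma contr_det (T : finType) (le : rel T)
  (lr : reflexive le) (la : antisymmetric le) (lt : transitive le) (c0 : T) :
  fence le le [set: T]%SET [set: T]%SET (fun _ => c0) id ->
  \det (emat le [set: T]%SET) = 0.
Proof.
move=> fc.
have [C [r [[sC iC fC mC fe] [d nb]]]] := core_all lr la lt [set: T]%SET.
have iT (A : {set T}) (h : T -> T) : into A [set: T]%SET h by move=> x; rewrite inE.
have e1 := fence_pre (iT C id) (fun x y _ _ (h : le x y) => h) fc.
have e2 := fence_post iC mC e1.
have e3 : fence le le C C (r \o id) id.
  apply: fence_eq => //.
  - by move=> x xC /=; rewrite fC.
  - by move=> x y xC yC lxy /=; rewrite !fC.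
have H := fence_id lr la lt nb (fence_trans e2 e3).
have {}H c : c \in C -> c = r c0 by move=> cC; rewrite -(H c cC).
have cardC : #|C| = 1%nat.
  have -> : C = [set r c0]%SET.
    apply/setP => z; rewrite inE; apply/idP/idP => [zC|/eqP ->].
      by apply/eqP; apply: H.
    by apply: iC; rewrite inE.
  exact: cards1.
suff dC : \det (emat le C) = 0 by move: d; rewrite dC normr0 => /eqP; rewrite normr_eq0 => /eqP.
rewrite (@det_reindex _ _ (emat le C) (0 : 'M[int]_1) (fun _ => ord0)) ?det0 //.
- move=> i j _; apply: val_inj.
  have hi : (val i < 1)%nat by rewrite -cardC ltn_ord.
  have hj : (val j < 1)%nat by rewrite -cardC ltn_ord.
  by move: hi hj; rewrite !ltnS !leqn0 => /eqP -> /eqP ->.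
- move=> i j; rewrite !mxE (H _ (enum_valP i)) (H _ (enum_valP j)) lr //.
Qed.

Module TopoM.
Local Open Scope classical_set_scope.
Local Open Scope ring_scope.
Section Topo.
Variable X : topologicalType.
Implicit Types x y z : X.

Lemma minU_nbhs x z : minU x z <-> (forall W, nbhs x W -> W z).
Proof.
split.
- move=> h W; rewrite nbhsE => -[B [oB Bx] BW]; apply: BW; apply: h; exact: conj oB Bx.
- by move=> h U [oU Ux]; apply: h; apply: open_nbhs_nbhs.
Qed.

Lemma minU_refl x : minU x x.
Proof. by move=> U [_ Ux]. Qed.

Lemma fle_minU x y : fle x y <-> minU y x.
Proof.
split; first by move=> h; apply: h; apply: minU_refl.
move=> h z hz U [oU Uy]; apply: hz; split => //; exact: h.
Qed.

Lemma fle_refl x : fle x x.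
Proof. by []. Qed.

Lemma fle_trans x y z : fle x y -> fle y z -> fle x z.
Proof. by move=> h1 h2 w /h1 /h2. Qed.

Lemma fle_anti x y : kolmogorov_space X -> fle x y -> fle y x -> x = y.
Proof.
move=> T0 /fle_minU hxy /fle_minU hyx.
apply/eqP; apply/negP => /negP/T0 [A [[]|[]]]; rewrite !inE => nA nA'.
- by apply: nA'; move/minU_nbhs: hyx; apply.
- by apply: nA'; move/minU_nbhs: hxy; apply.
Qed.

Lemma minU_self_nbhs n (fX : 'I_n -> X) x : labelling fX -> nbhs x (minU x).
Proof.
move=> [g gK Kg].
have : \forall z \near x, forall i, minU x (fX i) \/ z <> fX i.
  apply: filter_forall => i.
  case: (pselect (minU x (fX i))) => h.
    by apply: filterS filterT => z _; left.
  have [W nW nWi] : exists2 W, nbhs x W & ~ W (fX i).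
    apply: contra_notP h => hn; apply/minU_nbhs => W nW.
    by apply: contra_notP hn => nWi; exists W.
  by apply: filterS nW => z Wz; right => ez; apply: nWi; rewrite -ez.
apply: filterS => z hz; case: (hz (g z)); rewrite Kg // => /(_ erefl).
Qed.
End Topo.

Lemma cont_fle (X Y : topologicalType) (f : X -> Y) x y :
  continuous f -> fle x y -> fle (f x) (f y).
Proof.
move=> cf /fle_minU /minU_nbhs h; apply/fle_minU/minU_nbhs => W nW.
exact: (h _ (cf y W nW)).
Qed.


Definition ordle (X : topologicalType) n (fX : 'I_n -> X) : rel 'I_n :=
  fun i j => `[< fle (fX i) (fX j) >].

Definition I01 (t : RR) : Prop := (0 <= t <= 1)%R.

Lemma I01E (t : RR) : I01 t <-> (0 <= t <= 1).
Proof.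
rewrite /I01; split; first by case=> /RleP h1 /RleP h2; rewrite h1 h2.
by case/andP => /RleP h1 /RleP h2.
Qed.

Lemma itv01 (s : RR) : `[0, 1]%classic s <-> (0 <= s <= 1).
Proof. by rewrite /= in_itv /=. Qed.

Lemma homotopic_fence (X Y : topologicalType) n m (fX : 'I_n -> X) (fY : 'I_m -> Y)
   (gY : Y -> 'I_m) (h0 h1 : X -> Y) :
  labelling fY -> cancel gY fY -> homotopic h0 h1 ->
  fence (ordle fX) (ordle fY) [set: 'I_n]%SET [set: 'I_m]%SET
    (fun i => gY (h0 (fX i))) (fun i => gY (h1 (fX i))).
Proof.
move=> labY Kg [H [cH [H0 H1]]].
have cHp := proj1 (subspace_continuousP _ _) cH.
pose hs (t : RR) i := gY (H (fX i, t)).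
have key (t : RR) x (W : set Y) : 0 <= t <= 1 -> nbhs (H (x, t)) W ->
    exists A, exists B, [/\ nbhs x A, nbhs t B &
       forall x' s, A x' -> B s -> 0 <= s <= 1 -> W (H (x', s))].
  move=> It nW.
  have := cHp (x, t) (proj2 (I01E t) It) W nW.
  case=> [[A B] [nA nB] sAB]; exists A, B; split => // x' s Ax' Bs Is.
  apply: (sAB (x', s)) => //; exact: (proj2 (I01E s) Is).
have mono (t : RR) : 0 <= t <= 1 -> monoon (ordle fX) (ordle fY) [set: 'I_n]%SET (hs t).
  move=> It i j _ _ /asboolP hij; apply/asboolP; rewrite /hs !Kg.
  apply/fle_minU/minU_nbhs => W nW.
  have [A [B [nA nB HAB]]] := key t _ W It nW.
  apply: HAB => //; last exact: nbhs_singleton.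
  by move/fle_minU/minU_nbhs: hij; apply.
pose N t := [set s : RR | 0 <= s <= 1 -> forall i, ordle fY (hs s i) (hs t i)].
have loc (t : RR) : 0 <= t <= 1 -> nbhs t (N t).
  move=> It.
  have : \forall s \near t, forall i, 0 <= s <= 1 -> ordle fY (hs s i) (hs t i).
    apply: (@filter_forall RR _ (fun i (s : RR) => 0 <= s <= 1 -> ordle fY (hs s i) (hs t i)) (nbhs t) _) => i.
    have nW := minU_self_nbhs (H (fX i, t)) labY.
    have [A [B [nA nB HAB]]] := key t _ _ It nW.
    apply: filterS nB => s Bs Is; apply/asboolP; rewrite /hs !Kg.
    apply/fle_minU; apply: HAB => //; exact: nbhs_singleton.
  by apply: filterS => s hs' Is i; apply: hs'.
have step (t s : RR) : 0 <= t <= 1 -> 0 <= s <= 1 -> N t s ->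
    fence (ordle fX) (ordle fY) [set: 'I_n]%SET [set: 'I_m]%SET (hs s) (hs t).
  move=> It Is Nts; apply: fence1; split.
  - by move=> i; rewrite inE.
  - by move=> i; rewrite inE.
  - exact: mono.
  - exact: mono.
  - by move=> i _; apply: Nts.
pose S := [set t : RR | (0 <= t <= 1) /\
   fence (ordle fX) (ordle fY) [set: 'I_n]%SET [set: 'I_m]%SET (hs t) (hs 0)].
have SE : S = `[0, 1]%classic.
  apply: (@segment_connected RR 0 1).
  - exists 0; split; first by rewrite lexx ler01.
    exact: fen_refl.
  - exists [set s | exists2 t, S t & nbhs s (N t)].
      rewrite openE => s [t St nst]; apply: filterS (nbhs_interior nst) => u hu.
      by exists t.
    apply/seteqP; split.
    + move=> t [It ft]; split; first by apply/itv01.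
      by exists t => //; apply: loc.
    + move=> s [/itv01 Is [t [It ft] nst]]; split => //.
      by apply: fence_trans ft; apply: step => //; apply: nbhs_singleton nst.
  - exists (~` [set s | exists2 t, (0 <= t <= 1) /\
        ~ fence (ordle fX) (ordle fY) [set: 'I_n]%SET [set: 'I_m]%SET (hs t) (hs 0)
        & nbhs s (N t)]).
      apply: open_closedC.
      rewrite openE => s [t St nst]; apply: filterS (nbhs_interior nst) => u hu.
      by exists t.
    apply/seteqP; split.
    + move=> t [It ft]; split; first by apply/itv01.
      move=> [t' [It' nft'] nst']; apply: nft'.
      apply: fence_trans ft; apply: fence_sym; apply: step => //.
      exact: nbhs_singleton nst'.
    + move=> s [/itv01 Is nC]; split => //.
      apply: contrapT => nf; apply: nC; exists s => //; exact: loc.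
have : S 1 by rewrite SE; apply/itv01; rewrite ler01 lexx.
move=> [_ f1]; apply: fence_sym.
have -> : (fun i => gY (h0 (fX i))) = hs 0 by apply: boolp.funext => i; rewrite /hs -H0.
have -> : (fun i => gY (h1 (fX i))) = hs 1 by apply: boolp.funext => i; rewrite /hs -H1.
exact: f1.
Qed.

End TopoM.
Import TopoM.
Local Open Scope ring_scope.
Section Space.
Variables (X : topologicalType) (n : nat) (fX : 'I_n -> X).

Lemma ordle_refl : reflexive (ordle fX).
Proof. by move=> i; apply/asboolP; apply: fle_refl. Qed.

Lemma ordle_trans : transitive (ordle fX).
Proof. by move=> j i k /asboolP h1 /asboolP h2; apply/asboolP; apply: fle_trans h1 h2. Qed.

Lemma ordle_anti : finite_T0 fX -> antisymmetric (ordle fX).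
Proof.
move=> [[g gK Kg] T0] i j /andP[/asboolP h1 /asboolP h2].
by rewrite -(gK i) -(gK j) (fle_anti T0 h1 h2).
Qed.

Lemma XM_emat : \det (XM fX) = \det (emat (ordle fX) [set: 'I_n]%SET).
Proof.
apply: (det_reindex (s := fun i => enum_rank_in (finset.in_setT i) i)).
- by rewrite cardsT card_ord.
- by move=> i j /(congr1 enum_val); rewrite !enum_rankK_in ?finset.in_setT.
- by move=> i j; rewrite !mxE !enum_rankK_in ?finset.in_setT.
Qed.

Lemma minimal_nobeat : minimal_finite_space fX -> nobeat (ordle fX) [set: 'I_n]%SET.
Proof.
move=> [[[g gK Kg] T0] nb] i.
have finj : injective fX by apply: can_inj gK.
split.
- move=> [_ [m _ [/andP[nmi lmi] Hm]]]; apply: (nb (fX i)); left; exists (fX m).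
  split; first by split; [apply/asboolP|move/finj => e; move/eqP: nmi].
  move=> y [hy ny]; rewrite -(Kg y); apply/asboolP; apply: Hm; first by rewrite finset.in_setT.
  apply/andP; split; last by apply/asboolP; rewrite Kg.
  by apply/eqP => e; apply: ny; rewrite -e Kg.
- move=> [_ [m _ [/andP[nmi lmi] Hm]]]; apply: (nb (fX i)); right; exists (fX m).
  split; first by split; [apply/asboolP|move/finj => e; move/eqP: nmi; rewrite e].
  move=> y [hy ny]; rewrite -(Kg y); apply/asboolP; apply: Hm; first by rewrite finset.in_setT.
  apply/andP; split; last by apply/asboolP; rewrite Kg.
  by apply/eqP => e; apply: ny; rewrite -e Kg.
Qed.
End Space.

Lemma cont_mono (X Y : topologicalType) n m (fX : 'I_n -> X) (fY : 'I_m -> Y)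
  (gY : Y -> 'I_m) (f : X -> Y) : cancel gY fY -> continuous f ->
  monoon (ordle fX) (ordle fY) [set: 'I_n]%SET (fun i => gY (f (fX i))).
Proof.
move=> Kg cf i j _ _ /asboolP h; apply/asboolP; rewrite !Kg; exact: cont_fle.
Qed.

Lemma heq_fence (X Y : topologicalType) n m (fX : 'I_n -> X) (fY : 'I_m -> Y)
  (gX : X -> 'I_n) (gY : Y -> 'I_m) (f : X -> Y) (g : Y -> X) :
  labelling fX -> cancel gX fX -> cancel fX gX -> cancel gY fY ->
  homotopic (g \o f) idfun ->
  fence (ordle fX) (ordle fX) [set: 'I_n]%SET [set: 'I_n]%SET
    ((fun j => gX (g (fY j))) \o (fun i => gY (f (fX i)))) id.
Proof.
move=> labX KgX gKX KgY h.
have := homotopic_fence fX labX KgX h.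
move=> fe; apply: fence_ext (fence_sym (fence_ext _ (fence_sym fe))).
- by move=> i /=; rewrite KgY.
- by move=> i /=; rewrite gKX.
Qed.

Theorem mainTheorem4 :
  (forall (X Y : topologicalType) (n m : nat) (fX : 'I_n -> X) (fY : 'I_m -> Y),
      minimal_finite_space fX -> minimal_finite_space fY ->
      homotopy_equivalent X Y ->
      \det (XM fX) = \det (XM fY)) /\
  (forall (X Y : topologicalType) (n m : nat) (fX : 'I_n -> X) (fY : 'I_m -> Y),
      finite_T0 fX -> finite_T0 fY ->
      homotopy_equivalent X Y ->
      `|\det (XM fX)| = `|\det (XM fY)|) /\
  (forall (X : topologicalType) (n : nat) (fX : 'I_n -> X),
      finite_T0 fX -> contractible X ->
      \det (XM fX) = 0).
Proof.
split; [|split].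
- move=> X Y n m fX fY minX minY [f [g [cf [cg [hgf hfg]]]]].
  have ftX : finite_T0 fX by case: minX.
  have ftY : finite_T0 fY by case: minY.
  have labX : labelling fX by case: ftX.
  have labY : labelling fY by case: ftY.
  case: (labX) => gX gKX KgX; case: (labY) => gY gKY KgY.
  rewrite (@XM_emat _ _ fX) (@XM_emat _ _ fY).
  have iT (T : finType) (A : {set T}) (h : T -> T) : into A [set: T]%SET h
    by move=> x; rewrite finset.in_setT.
  have H := (core_iso (@ordle_refl _ _ fX) (ordle_anti ftX) (@ordle_trans _ _ fX)
                   (@ordle_refl _ _ fY) (ordle_anti ftY) (@ordle_trans _ _ fY)
                   (f := fun i => gY (f (fX i))) (g := fun j => gX (g (fY j)))
                   (rX := id) (rY := id) (C := [set: 'I_n]%SET) (D := [set: 'I_m]%SET)).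
  apply: H.
  + exact: (@cont_mono _ _ _ _ fX fY gY f KgY cf).
  + exact: (@cont_mono _ _ _ _ fY fX gX g KgX cg).
  + exact: (@heq_fence _ _ _ _ fX fY gX gY f g labX KgX gKX KgY hgf).
  + exact: (@heq_fence _ _ _ _ fY fX gY gX g f labY KgY gKY KgX hfg).
  + exact: iT.
  + by [].
  + by [].
  + exact: fen_refl.
  + exact: iT.
  + by [].
  + by [].
  + exact: fen_refl.
  + exact: minimal_nobeat.
  + exact: minimal_nobeat.
- move=> X Y n m fX fY ftX ftY [f [g [cf [cg [hgf hfg]]]]].
  have labX : labelling fX by case: ftX.
  have labY : labelling fY by case: ftY.
  case: (labX) => gX gKX KgX; case: (labY) => gY gKY KgY.
  rewrite (@XM_emat _ _ fX) (@XM_emat _ _ fY).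
  have [C [rX [[sC iC fC mC feC] [dC nbC]]]] :=
    core_all (@ordle_refl _ _ fX) (ordle_anti ftX) (@ordle_trans _ _ fX) [set: 'I_n]%SET.
  have [D [rY [[sD iD fD mD feD] [dD nbD]]]] :=
    core_all (@ordle_refl _ _ fY) (ordle_anti ftY) (@ordle_trans _ _ fY) [set: 'I_m]%SET.
  rewrite dC dD; congr `|_|.
  apply: (core_iso (@ordle_refl _ _ fX) (ordle_anti ftX) (@ordle_trans _ _ fX)
                   (@ordle_refl _ _ fY) (ordle_anti ftY) (@ordle_trans _ _ fY)
                   (f := fun i => gY (f (fX i))) (g := fun j => gX (g (fY j)))
                   (rX := rX) (rY := rY)) => //.
  + exact: (@cont_mono _ _ _ _ fX fY gY f KgY cf).
  + exact: (@cont_mono _ _ _ _ fY fX gX g KgX cg).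
  + exact: (@heq_fence _ _ _ _ fX fY gX gY f g labX KgX gKX KgY hgf).
  + exact: (@heq_fence _ _ _ _ fY fX gY gX g f labY KgY gKY KgX hfg).
- move=> X n fX ftX [x0 h].
  have labX : labelling fX by case: ftX.
  case: (labX) => gX gKX KgX.
  rewrite XM_emat.
  apply: (contr_det (@ordle_refl _ _ fX) (ordle_anti ftX) (@ordle_trans _ _ fX) (c0 := gX x0)).
  have fe := homotopic_fence fX labX KgX h.
  apply: fence_sym; apply: fence_ext fe.
  by move=> i /=; rewrite gKX.
Qed.
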